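(* Let $U\subset\mathbb{R}^s$ be open, $X:U\to\mathbb{R}^{n+1}_1$ a spacelike embedding, $M=X(U)$, and $n^T$ a smooth future directed unit timelike normal field. Let $d\mathfrak{v}_{N_1(M)[n^T]}$ be the Riemannian volume element of $N_1(M)[n^T]$ and $d\mathfrak{v}_{\mathbb{S}^{n-1}_+}$ that of $\mathbb{S}^{n-1}_+$. Then at every $(p,\xi)\in N_1(M)[n^T]$, $$\big(\widetilde{\mathbb{LG}}(n^T)^*d\mathfrak{v}_{\mathbb{S}^{n-1}_+}\big)_{(p,\xi)}=|\widetilde K_\ell(n^T)(p,\xi)|\,d\mathfrak{v}_{N_1(M)[n^T](p,\xi)}.$$
   Context: $\mathbb{R}^{n+1}_1$ is $\mathbb{R}^{n+1}$ with $\langle x,y\rangle=-x_0y_0+\sum_{i=1}^n x_iy_i$; spacelike embedding means tangent spaces consist of vectors with $\langle v,v\rangle>0$. $\mathbb{S}^{n-1}_+=\{x:\langle x,x\rangle=0,x_0=1\}$ with the (positive definite) metric induced by $\langle\,,\rangle$; for nonzero lightlike $x$, $\widetilde x=x/x_0$. $N_p(M)$ is the pseudo-orthogonal complement of $T_pM$; $n^T(u)\in N_{X(u)}(M)$, $\langle n^T,n^T\rangle=-1$, $n^T_0>0$. $N_1(M)_p[n^T]=\{\xi\in N_p(M):\langle\xi,\xi\rangle=1,\langle\xi,n^T(p)\rangle=0\}$, $N_1(M)[n^T]=\bigcup_pN_1(M)_p[n^T]$. Its tangent space at $(p,\xi)$ is identified with $T_pM\oplus\{\eta\in N_p(M):\langle\eta,\xi\rangle=\langle\eta,n^T(p)\rangle=0\}\subset\mathbb{R}^{n+1}_1$,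 and it carries the Riemannian metric induced by $\langle\,,\rangle$. $\mathbb{R}^{n+1}_1=T_{(p,\xi)}N_1(M)[n^T]\oplus\mathrm{span}\{n^T(p),\xi\}$ and $\Pi^\tau$ denotes projection to the first summand. $\widetilde{\mathbb{LG}}(n^T)(p,\xi)=\widetilde{n^T(p)+\xi}$ and $\widetilde K_\ell(n^T)(p,\xi)=\det\big(-\Pi^\tau\circ d_{(p,\xi)}\widetilde{\mathbb{LG}}(n^T)\big)$. *)

(* Defs.v *)
From HB Require Import structures.
From mathcomp Require Import all_boot all_order all_algebra.
From mathcomp Require Import all_classical all_reals all_analysis.
Set Implicit Arguments. Unset Strict Implicit. Unset Printing Implicit Defensive.
Import Order.TTheory GRing.Theory Num.Theory.
Import numFieldNormedType.Exports.
Local Open Scope classical_set_scope.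
Local Open Scope ring_scope.

Section Defs.
Variable R : realType.

(* Lorentz-Minkowski pseudo scalar product on R^{n+1}_1 ; coordinate 0 is x_0 *)
Definition lprod (n : nat) (x y : 'rV[R]_n.+1) : R :=
  \sum_(i < n.+1) (if i == ord0 then -1 else 1) * x ord0 i * y ord0 i.

Definition tildev (n : nat) (x : 'rV[R]_n.+1) : 'rV[R]_n.+1 := (x ord0 ord0)^-1 *: x.

Fixpoint itD (s m : nat) (vs : seq 'rV[R]_s) (f : 'rV[R]_s -> 'rV[R]_m)
  : 'rV[R]_s -> 'rV[R]_m :=
  match vs with
  | [::] => f
  | v :: vs' => fun x => 'D_v (itD vs' f) x
  end.

(* C^infinity on the open set U: all iterated directional derivatives
   exist and are (Frechet) differentiable at every point of U *)
Definition smooth_on (s m : nat) (U : set 'rV[R]_s) (f : 'rV[R]_s -> 'rV[R]_m) :=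
  forall (vs : seq 'rV[R]_s) (x : 'rV[R]_s), U x -> differentiable (itD vs f) x.

Definition spacelike_embedding (s n : nat) (U : set 'rV[R]_s)
  (X : 'rV[R]_s -> 'rV[R]_n.+1) :=
  [/\ smooth_on U X,
      (forall u v, U u -> 'D_v X u = 0 -> v = 0),
      (forall u v, U u -> v != 0 -> 0 < lprod ('D_v X u) ('D_v X u)),
      (forall u1 u2, U u1 -> U u2 -> X u1 = X u2 -> u1 = u2)
    & (forall u, U u -> forall e : R, 0 < e -> exists2 d : R, 0 < d &
         forall u', U u' -> `|X u' - X u| < d -> `|u' - u| < e)     (* homeo onto image *)
  ].

(* x in N_{X(u)}(M) : pseudo-orthogonal to T_{X(u)}M = image of dX_u *)
Definition in_normal (s n : nat) (X : 'rV[R]_s -> 'rV[R]_n.+1) (u : 'rV[R]_s)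
  (x : 'rV[R]_n.+1) := forall v : 'rV[R]_s, lprod x ('D_v X u) = 0.

Definition future_unit_timelike_normal (s n : nat) (U : set 'rV[R]_s)
  (X : 'rV[R]_s -> 'rV[R]_n.+1) (nT : 'rV[R]_s -> 'rV[R]_n.+1) :=
  [/\ smooth_on U nT,
      (forall u, U u -> in_normal X u (nT u)),
      (forall u, U u -> lprod (nT u) (nT u) = -1)
    & (forall u, U u -> 0 < nT u ord0 ord0)].

Definition inN1 (s n : nat) (X nT : 'rV[R]_s -> 'rV[R]_n.+1) (u : 'rV[R]_s)
  (xi : 'rV[R]_n.+1) :=
  [/\ in_normal X u xi, lprod xi xi = 1 & lprod xi (nT u) = 0].

Definition inW (s n : nat) (X nT : 'rV[R]_s -> 'rV[R]_n.+1) (u : 'rV[R]_s)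
  (xi eta : 'rV[R]_n.+1) :=
  [/\ in_normal X u eta, lprod eta xi = 0 & lprod eta (nT u) = 0].

(* tanrel U X nT u xi w L : w is a tangent vector of N_1(M)[n^T] at (X u, xi),
   written (via the identification T = T_pM (+) W) as an element of R^{n+1}_1,
   and L = d_{(p,xi)} LG~(n^T) (w).  The tangent vector is the velocity of a
   curve t |-> (X(a t), z t) in N_1(M)[n^T] through (X u, xi); its T_pM part is
   d/dt X(a t), its second part eta is the component of z'(0) in W
   (w.r.t. R^{n+1} = T_pM (+) span{n^T,xi} (+) W). *)
Definition tanrel (s n : nat) (U : set 'rV[R]_s) (X nT : 'rV[R]_s -> 'rV[R]_n.+1)
  (u : 'rV[R]_s) (xi w L : 'rV[R]_n.+1) :=
  exists (a : R -> 'rV[R]_s) (z : R -> 'rV[R]_n.+1) (eta : 'rV[R]_n.+1),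
  [/\ a 0 = u, z 0 = xi,
      (\forall t \near (0 : R), U (a t) /\ inN1 X nT (a t) (z t)),
      derivable a 0 1 & derivable z 0 1] /\
  [/\ inW X nT u xi eta,
      (exists (e : 'rV[R]_s) (al be : R),
          'D_1 z 0 - eta = 'D_e X u + al *: nT u + be *: xi),
      w = 'D_1 (X \o a) 0 + eta
    & L = 'D_1 (fun t => tildev (nT (a t) + z t)) 0].

(* Pi^tau : projection of R^{n+1}_1 = T (+) span{n^T(p), xi} onto T
   (n^T, xi orthonormal with <n^T,n^T> = -1, <xi,xi> = 1, both orthogonal to T) *)
Definition Pitau (n : nat) (nTu xi y : 'rV[R]_n.+1) : 'rV[R]_n.+1 :=
  y + lprod y nTu *: nTu - lprod y xi *: xi.

Definition gram (n k : nat) (w : 'I_k -> 'rV[R]_n.+1) : 'M[R]_k :=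
  \matrix_(i, j) lprod (w i) (w j).

(* K~_l(n^T)(p,xi) = det(-Pi^tau o dLG~), computed in a basis b of T_{(p,xi)}N_1 *)
Definition Kl (s n : nat) (U : set 'rV[R]_s) (X nT : 'rV[R]_s -> 'rV[R]_n.+1)
  (u : 'rV[R]_s) (xi : 'rV[R]_n.+1) : R :=
  xget 0 [set k : R | exists (b Lb : 'I_n.-1 -> 'rV[R]_n.+1) (A : 'M[R]_n.-1),
     [/\ (forall i, tanrel U X nT u xi (b i) (Lb i)),
         (forall c : 'I_n.-1 -> R, \sum_i c i *: b i = 0 -> forall i, c i = 0),
         (forall w L, tanrel U X nT u xi w L ->
              exists c : 'I_n.-1 -> R, w = \sum_i c i *: b i),
         (forall i, - Pitau (nT u) xi (Lb i) = \sum_j A i j *: b j)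
       & k = \det A]].

End Defs.

(* Main.v *)
Require Import Defs.
From HB Require Import structures.
From mathcomp Require Import all_boot all_order all_algebra.
From mathcomp Require Import all_classical all_reals all_analysis.
From mathcomp Require Import ring lra.
Set Implicit Arguments. Unset Strict Implicit. Unset Printing Implicit Defensive.
Import Order.TTheory GRing.Theory Num.Theory.
Import numFieldNormedType.Exports.
Local Open Scope classical_set_scope.
Local Open Scope ring_scope.

Section LP.
Variable R : realType.
Variable n : nat.
Implicit Types x y z : 'rV[R]_n.+1.

Lemma lprodC x y : lprod x y = lprod y x.
Proof. by rewrite /lprod; apply: eq_bigr => i _; ring. Qed.

Lemma lprodDl x y z : lprod (x + y) z = lprod x z + lprod y z.
Proof. by rewrite /lprod -big_split /=; apply: eq_bigr => i _; rewrite !mxE; ring. Qed.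

Lemma lprodZl (a : R) x y : lprod (a *: x) y = a * lprod x y.
Proof. by rewrite /lprod mulr_sumr; apply: eq_bigr => i _; rewrite !mxE; ring. Qed.

Lemma lprod0l y : lprod 0 y = 0.
Proof. by rewrite /lprod big1 // => i _; rewrite !mxE; ring. Qed.

Lemma lprodNl x y : lprod (- x) y = - lprod x y.
Proof. by rewrite -scaleN1r lprodZl mulN1r. Qed.

Lemma lprodBl x y z : lprod (x - y) z = lprod x z - lprod y z.
Proof. by rewrite lprodDl lprodNl. Qed.

Lemma lprodDr x y z : lprod z (x + y) = lprod z x + lprod z y.
Proof. by rewrite lprodC lprodDl !(lprodC z). Qed.
Lemma lprodZr (a : R) x y : lprod y (a *: x) = a * lprod y x.
Proof. by rewrite lprodC lprodZl lprodC. Qed.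
Lemma lprod0r y : lprod y 0 = 0.
Proof. by rewrite lprodC lprod0l. Qed.
Lemma lprodNr x y : lprod y (- x) = - lprod y x.
Proof. by rewrite lprodC lprodNl lprodC. Qed.
Lemma lprodBr x y z : lprod z (x - y) = lprod z x - lprod z y.
Proof. by rewrite lprodDr lprodNr. Qed.

Lemma lprod_suml m (c : 'I_m -> R) (v : 'I_m -> 'rV[R]_n.+1) y :
  lprod (\sum_k c k *: v k) y = \sum_k c k * lprod (v k) y.
Proof.
elim/big_rec2: _ => [|k a b _ IH]; first by rewrite lprod0l.
by rewrite lprodDl lprodZl IH.
Qed.

Lemma lprod_sumr m (c : 'I_m -> R) (v : 'I_m -> 'rV[R]_n.+1) y :
  lprod y (\sum_k c k *: v k) = \sum_k c k * lprod y (v k).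
Proof. by rewrite lprodC lprod_suml; apply: eq_bigr => k _; rewrite lprodC. Qed.

Lemma Pitau_lin (a b : 'rV[R]_n.+1) (k : R) x y :
  Pitau a b (k *: x + y) = k *: Pitau a b x + Pitau a b y.
Proof.
rewrite /Pitau lprodDl lprodZl lprodDl lprodZl.
by apply/rowP => j; rewrite !mxE; ring.
Qed.

Lemma Pitau0 (a b : 'rV[R]_n.+1) : Pitau a b 0 = 0.
Proof. by rewrite /Pitau !lprod0l !scale0r subr0 addr0. Qed.

Lemma Pitau_sum m (c : 'I_m -> R) (v : 'I_m -> 'rV[R]_n.+1) a b :
  Pitau a b (\sum_k c k *: v k) = \sum_k c k *: Pitau a b (v k).
Proof.
elim/big_rec2: _ => [|k p q _ IH]; first exact: Pitau0.
by rewrite Pitau_lin IH.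
Qed.

Lemma PitauN (a b : 'rV[R]_n.+1) x : Pitau a b (- x) = - Pitau a b x.
Proof. by rewrite -scaleN1r -[_ *: x]addr0 Pitau_lin Pitau0 addr0 scaleN1r. Qed.

Lemma PitauD (a b : 'rV[R]_n.+1) x y : Pitau a b (x + y) = Pitau a b x + Pitau a b y.
Proof. by rewrite -{1}[x]scale1r Pitau_lin scale1r. Qed.

Lemma PitauZ (a b : 'rV[R]_n.+1) k x : Pitau a b (k *: x) = k *: Pitau a b x.
Proof. by rewrite -[_ *: x]addr0 Pitau_lin Pitau0 addr0. Qed.
End LP.
Section Gram.
Variable R : realType.
Variable n : nat.

Lemma gram_comb k m (M : 'M[R]_(k, m)) (b : 'I_m -> 'rV[R]_n.+1)
   (x : 'I_k -> 'rV[R]_n.+1) :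
  (forall i, x i = \sum_j M i j *: b j) -> gram x = M *m gram b *m M^T.
Proof.
move=> hx; apply/matrixP => i j; rewrite !mxE hx lprod_suml.
under [RHS]eq_bigr => l _ do rewrite mxE mulr_suml.
rewrite exchange_big /=; apply: eq_bigr => l _.
rewrite hx lprod_sumr mulr_sumr; apply: eq_bigr => l' _.
by rewrite !mxE; ring.
Qed.

Lemma gramN m (x : 'I_m -> 'rV[R]_n.+1) : gram (fun i => - x i) = gram x.
Proof. by apply/matrixP => i j; rewrite !mxE lprodNl lprodNr opprK. Qed.

Lemma det_gram_dep m (x : 'I_m -> 'rV[R]_n.+1) (c : 'I_m -> R) i0 :
  c i0 != 0 -> \sum_i c i *: x i = 0 -> \det (gram x) = 0.
Proof.
move=> ci0 hs; apply/eqP/det0P; exists (\row_i c i).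
  by apply/eqP => /rowP /(_ i0); rewrite !mxE; apply/eqP.
apply/rowP => j; rewrite !mxE.
rewrite -[RHS](lprod0l (x j)) -hs lprod_suml.
by apply: eq_bigr => i _; rewrite !mxE.
Qed.

End Gram.
Section Dim.
Variable R : realType.

Lemma ker_nz k l (M : 'M[R]_(k, l)) : (l < k)%N ->
  exists2 v : 'rV[R]_k, v != 0 & v *m M = 0.
Proof.
move=> lk; exists (nz_row (kermx M)).
  rewrite nz_row_eq0 -mxrank_eq0 mxrank_ker.
  have := rank_leq_col M; rewrite subn_eq0 -ltnNge => h.
  by apply: leq_ltn_trans h lk.
by apply/sub_kermxP; apply: nz_row_sub.
Qed.

Lemma ord3_cases (j : 'I_3) :
  j = ord0 \/ j = lift ord0 ord0 \/ j = lift ord0 (lift ord0 (ord0 : 'I_1)).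
Proof.
case: j => [[|[|[|//]]] Hj]; [left|right;left|right;right]; exact/val_inj.
Qed.

Lemma span_Q m (w : 'I_m -> 'rV[R]_m.+2) (p q y : 'rV[R]_m.+2) :
  lprod p p = -1 -> lprod q q = 1 -> lprod p q = 0 ->
  (forall i, lprod (w i) p = 0 /\ lprod (w i) q = 0) ->
  (forall c : 'I_m -> R, \sum_i c i *: w i = 0 -> forall i, c i = 0) ->
  lprod y p = 0 -> lprod y q = 0 ->
  exists c : 'I_m -> R, y = \sum_i c i *: w i.
Proof.
move=> hpp hqq hpq hw hind hyp hyq.
pose g (j : 'I_3) := nth 0 [:: y; p; q] j.
pose M := col_mx (\matrix_i w i) (\matrix_j g j).
have lt : (m.+2 < m + 3)%N by rewrite addn3.
have [v vn0 vM] := ker_nz M lt.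
pose a i := v 0 (lshift 3 i).
pose b j := v 0 (rshift m j).
have E : \sum_i a i *: w i + \sum_j b j *: g j = 0.
  transitivity (v *m M); last exact: vM.
  rewrite mulmx_sum_row big_split_ord /=.
  by congr (_ + _); apply: eq_bigr => i _; rewrite /M ?rowKu ?rowKd rowK.
have E3 : \sum_j b j *: g j = b ord0 *: y + b (lift ord0 ord0) *: p
     + b (lift ord0 (lift ord0 (ord0 : 'I_1))) *: q.
  by rewrite !big_ord_recl big_ord0 addr0 addrA.
rewrite E3 in E.
have Ep := congr1 (fun x => lprod x p) E.
have Eq := congr1 (fun x => lprod x q) E.
move: Ep Eq; rewrite /= !lprodDl !lprodZl lprod_suml !lprod0l.
have s1 : \sum_k a k * lprod (w k) p = 0.
  by apply: big1 => i _; rewrite (proj1 (hw i)) mulr0.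
have s2 : \sum_k a k * lprod (w k) q = 0.
  by apply: big1 => i _; rewrite (proj2 (hw i)) mulr0.
rewrite lprod_suml s1 s2.
rewrite hyp hyq hpp hqq hpq (lprodC q p) hpq => h1 h2.
have b1 : b (lift ord0 ord0) = 0 by lra.
have b2 : b (lift ord0 (lift ord0 (ord0 : 'I_1))) = 0 by lra.
rewrite b1 b2 !scale0r !addr0 in E.
have [b0|b0] := eqVneq (b ord0) 0.
  exfalso; move: vn0; rewrite b0 scale0r addr0 in E.
  have ha := hind a E.
  case/eqP; apply/rowP => r; rewrite mxE.

  case: (split_ordP r) => [i ->|j ->]; first by have := ha i.
  by case: (ord3_cases j) => [->|[->|->]].
exists (fun i => - (b ord0)^-1 * a i).
apply: (scalerI b0); rewrite scaler_sumr.
rewrite (eq_bigr (fun i => - (a i *: w i))); last first.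
  by move=> i _; rewrite scalerA mulrA mulrN divff // mulN1r scaleNr.
rewrite sumrN; apply/eqP; rewrite -addr_eq0 addrC; exact/eqP.
Qed.
End Dim.
Section Calc.
Variable R : realType.

Lemma Dlin (V W : normedModType R) (f : V -> W) x m (c : 'I_m -> R) (v : 'I_m -> V) :
  differentiable f x ->
  'D_(\sum_k c k *: v k) f x = \sum_k c k *: 'D_(v k) f x.
Proof.
move=> df; rewrite deriveE // linear_sum; apply: eq_bigr => k _.
by rewrite linearZ /= deriveE.
Qed.

Lemma DlinB (V W : normedModType R) (f : V -> W) x v v' :
  differentiable f x -> 'D_(v - v') f x = 'D_v f x - 'D_v' f x.
Proof. by move=> df; rewrite !deriveE // linearB. Qed.

Lemma Dcomp (V W : normedModType R) (f : R -> V) (g : V -> W) t :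
  derivable f t 1 -> differentiable g (f t) ->
  'D_1 (g \o f) t = 'D_('D_1 f t) g (f t).
Proof.
move=> /derivable1_diffP df dg.
rewrite deriveE; last exact: differentiable_comp.
by rewrite diff_comp //= -!deriveE.
Qed.

Lemma Dcomp_derivable (V W : normedModType R) (f : R -> V) (g : V -> W) t :
  derivable f t 1 -> differentiable g (f t) -> derivable (g \o f) t 1.
Proof.
move=> /derivable1_diffP df dg; apply/derivable1_diffP.
exact: differentiable_comp.
Qed.

Variable n : nat.

Lemma Dcoord (f : R -> 'rV[R]_n.+1) t i :
  derivable f t 1 -> 'D_1 (fun s => f s 0 i) t = ('D_1 f t) 0 i.
Proof. by move=> df; rewrite (derive_mx df) mxE. Qed.

Lemma Dcoord_derivable (f : R -> 'rV[R]_n.+1) t i :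
  derivable f t 1 -> derivable (fun s => f s 0 i) t 1.
Proof. by move=> /derivable_mxP; apply. Qed.

Lemma Dlprod (f g : R -> 'rV[R]_n.+1) t :
  derivable f t 1 -> derivable g t 1 ->
  'D_1 (fun s => lprod (f s) (g s)) t =
    lprod ('D_1 f t) (g t) + lprod (f t) ('D_1 g t).
Proof.
move=> df dg.
have -> : (fun s => lprod (f s) (g s)) =
   \sum_(i < n.+1) (fun s => ((if i == ord0 then -1 else 1) * f s 0 i) * g s 0 i).
  by rewrite fct_sumE.
rewrite derive_sum; last first.
  move=> i; apply: derivableM; last exact: Dcoord_derivable.
  apply: derivableM; [exact: derivable_cst | exact: Dcoord_derivable].
rewrite /lprod -big_split /=; apply: eq_bigr => i _.
rewrite deriveM; last exact: Dcoord_derivable.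
  rewrite deriveM; [|exact: derivable_cst|exact: Dcoord_derivable].
  rewrite derive_cst !Dcoord //.
  by rewrite /GRing.scale /=; ring.
apply: derivableM; [exact: derivable_cst | exact: Dcoord_derivable].
Qed.

Lemma Dtilde (y : R -> 'rV[R]_n.+1) t : derivable y t 1 -> y t 0 0 != 0 ->
  'D_1 (fun s => tildev (y s)) t =
   (y t 0 0)^-1 *: 'D_1 y t + (- (y t 0 0)^-2 * ('D_1 y t) 0 0) *: y t.
Proof.
move=> dy y0.
have d0 := Dcoord_derivable (i:=0) dy.
have dV : derivable (fun s => (y s 0 0)^-1) t 1 := derivableV y0 d0.
have ce : forall j, (fun s => tildev (y s) 0 j) = (fun s => (y s 0 0)^-1) * (fun s => y s 0 j).
  by move=> j; apply/funext => s; rewrite /tildev !mxE.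
have dt : derivable (fun s => tildev (y s)) t 1.
  apply/derivable_mxP => i j; rewrite (ord1 i) ce.
  exact: (derivableM dV (Dcoord_derivable (i:=j) dy)).
rewrite (derive_mx dt); apply/rowP => j; rewrite !mxE ce.
rewrite (deriveM dV (Dcoord_derivable (i:=j) dy)).
rewrite (deriveV y0 d0) (Dcoord 0 dy) (Dcoord j dy).
by rewrite /GRing.scale /=; ring.
Qed.

End Calc.

Section LinFinal.
Variable R : realType.
Variable n : nat.
Lemma lin_final m (a b : 'rV[R]_n.+1) (c : 'I_m -> R) (c0 : R)
   (A B C : 'I_m -> 'rV[R]_n.+1) :
  c0 *: (Pitau a b (\sum_k c k *: A k) + \sum_k c k *: B k + \sum_k c k *: C k)
  = \sum_k c k *: (c0 *: (Pitau a b (A k) + B k + C k)).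
Proof.
rewrite Pitau_sum -!big_split scaler_sumr; apply: eq_bigr => k _ /=.
by rewrite !scalerDr !scalerA mulrC.
Qed.

Lemma sum_combD m (c : 'I_m -> R) (A B : 'I_m -> 'rV[R]_n.+1) :
  \sum_k c k *: (A k + B k) = \sum_k c k *: A k + \sum_k c k *: B k.
Proof. by rewrite -big_split; apply: eq_bigr => k _; rewrite scalerDr. Qed.
End LinFinal.
Lemma span_Qn (R : realType) n (w : 'I_n.-1 -> 'rV[R]_n.+1) (p q y : 'rV[R]_n.+1) :
  lprod p p = -1 -> lprod q q = 1 -> lprod p q = 0 ->
  (forall i, lprod (w i) p = 0 /\ lprod (w i) q = 0) ->
  (forall c : 'I_n.-1 -> R, \sum_i c i *: w i = 0 -> forall i, c i = 0) ->
  lprod y p = 0 -> lprod y q = 0 ->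
  exists c : 'I_n.-1 -> R, y = \sum_i c i *: w i.
Proof.
case: n w p q y => [|m] w p q y; last exact: span_Q.
move=> _ hq; exfalso; move: hq; rewrite /lprod big_ord1 eqxx => h.
have := sqr_ge0 (q 0 ord0); rewrite expr2; lra.
Qed.

Section Main.
Variables (R : realType) (s n : nat) (U : set 'rV[R]_s).
Variables (X nT : 'rV[R]_s -> 'rV[R]_n.+1) (u : 'rV[R]_s) (xi : 'rV[R]_n.+1).
Hypotheses (hX : spacelike_embedding U X) (hN : future_unit_timelike_normal U X nT).
Hypotheses (hu : U u) (hxi : inN1 X nT u xi).

Lemma dX x : U x -> differentiable X x.
Proof. by case: hX => sm _ _ _ _ Ux; exact: (sm [::] x Ux). Qed.

Lemma dDX v x : U x -> differentiable (fun y => 'D_v X y) x.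
Proof. by case: hX => sm _ _ _ _ Ux; exact: (sm [:: v] x Ux). Qed.

Lemma dN x : U x -> differentiable nT x.
Proof. by case: hN => sm _ _ _ Ux; exact: (sm [::] x Ux). Qed.

Lemma hnn : lprod (nT u) (nT u) = -1.
Proof. by case: hN => _ _ h _; exact: h. Qed.

Lemma hxx : lprod xi xi = 1.
Proof. by case: hxi. Qed.

Lemma hxn : lprod xi (nT u) = 0.
Proof. by case: hxi. Qed.

Lemma hnx : lprod (nT u) xi = 0.
Proof. by rewrite lprodC hxn. Qed.

Lemma nT_normal v : lprod (nT u) ('D_v X u) = 0.
Proof. by case: hN => _ h _ _; exact: h. Qed.

Lemma xi_normal v : lprod xi ('D_v X u) = 0.
Proof. by case: hxi => h _ _; exact: h. Qed.

Definition y0 := nT u + xi.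

Lemma y0y0 : lprod y0 y0 = 0.
Proof.
rewrite /y0 !lprodDl !lprodDr hnn hxx hxn hnx; ring.
Qed.

Lemma y00 : y0 0 0 != 0.
Proof.
apply/negP => /eqP h0.
have hsum : \sum_(i < n.+1) (if i == ord0 then -1 else 1) * y0 0 i * y0 0 i = 0.
  exact: y0y0.
have pos : forall i : 'I_n.+1, true -> 0 <= (if i == ord0 then -1 else 1) * y0 0 i * y0 0 i.
  move=> i _; case: eqP => [->|_]; first by rewrite (_ : y0 0 ord0 = 0) ?mulr0 //; exact: h0.
  by rewrite mul1r -expr2 sqr_ge0.
have z : y0 = 0.
  apply/rowP => i; rewrite [RHS]mxE.
  have hi := psumr_eq0P pos hsum (i:=i) isT.
  case: (eqVneq i ord0) hi => [->|ne]; first by move=> _; exact: h0.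
  by rewrite ?(negbTE ne) mul1r => /eqP; rewrite mulf_eq0 orbb => /eqP.
have : xi = - nT u by apply/eqP; rewrite -addr_eq0 addrC; apply/eqP; exact: z.
move=> e; have := hxx; rewrite e lprodNl lprodNr hnn => h; lra.
Qed.

Lemma PiT x : lprod x (nT u) = 0 -> lprod x xi = 0 -> Pitau (nT u) xi x = x.
Proof. by move=> h1 h2; rewrite /Pitau h1 h2 !scale0r addr0 subr0. Qed.

Lemma PinT : Pitau (nT u) xi (nT u) = 0.
Proof. by rewrite /Pitau hnn hnx scale0r subr0 scaleN1r subrr. Qed.

Lemma Pixi : Pitau (nT u) xi xi = 0.
Proof. by rewrite /Pitau hxn hxx scale0r addr0 scale1r subrr. Qed.

Lemma Piy0 : Pitau (nT u) xi y0 = 0.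
Proof. by rewrite /y0 PitauD PinT Pixi addr0. Qed.

Definition c0 := (y0 0 0)^-1.

Lemma Pi_formula (p q et : 'rV[R]_n.+1) (al be k : R) :
  lprod et (nT u) = 0 -> lprod et xi = 0 ->
  lprod q (nT u) = 0 -> lprod q xi = 0 ->
  Pitau (nT u) xi (c0 *: (p + (et + (q + al *: nT u + be *: xi))) + k *: y0)
  = c0 *: (Pitau (nT u) xi p + q + et).
Proof.
move=> h1 h2 h3 h4.
rewrite PitauD !PitauZ Piy0 scaler0 addr0 !PitauD !PitauZ PinT Pixi.
rewrite !scaler0 !addr0 (PiT h1 h2) (PiT h3 h4).
by rewrite [et + q]addrC addrA.
Qed.

Lemma decomp w L : tanrel U X nT u xi w L -> exists v eta e,
 [/\ w = 'D_v X u + eta, inW X nT u xi eta,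
     (forall v', lprod ('D_e X u) ('D_v' X u) =
                  - lprod xi ('D_v (fun x => 'D_v' X x) u)),
     Pitau (nT u) xi L = c0 *: (Pitau (nT u) xi ('D_v nT u) + 'D_e X u + eta)
   & lprod L y0 = 0].
Proof.
case=> a [z [eta [[a0 z0 Hn da dz] [hW [e [al [be hz]]] hw hL]]]].
pose v := 'D_1 a 0.
have ha0 : a 0 = u := a0.
have hz' : 'D_1 z 0 = eta + ('D_e X u + al *: nT u + be *: xi).
  by rewrite -hz addrC subrK.
have dXu : differentiable X (a 0) by rewrite ha0; exact: (dX hu).
have dnT : differentiable nT (a 0) by rewrite ha0; exact: (dN hu).
have yE : (fun t => nT (a t) + z t) = (nT \o a) + z by [].
have dy : derivable (fun t => nT (a t) + z t) 0 1.
  rewrite yE; exact: (derivableD (Dcomp_derivable da dnT) dz).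
have y'E : 'D_1 (fun t => nT (a t) + z t) 0 = 'D_v nT u + 'D_1 z 0.
  rewrite yE deriveD; last exact: dz.
    by rewrite (Dcomp da dnT) ha0.
  exact: Dcomp_derivable.
have yy0 : (fun t => nT (a t) + z t) 0 = y0 by rewrite /= ha0 z0.
have y0n : (fun t => nT (a t) + z t) 0 0 0 != 0 by rewrite yy0; exact: y00.
have hL' : L = c0 *: ('D_v nT u + 'D_1 z 0)
     + (- (y0 0 0)^-2 * ('D_v nT u + 'D_1 z 0) 0 0) *: y0.
  by rewrite hL (Dtilde dy y0n) y'E yy0.
exists v, eta, e; split.
- rewrite hw (Dcomp da dXu) ha0; reflexivity.
- exact: hW.
- move=> v'.
  have dg : derivable ((fun x => 'D_v' X x) \o a) 0 1.
    by apply: Dcomp_derivable => //; rewrite ha0; exact: (dDX _ hu).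
  have H0 : \forall t \near 0, lprod (z t) (((fun x => 'D_v' X x) \o a) t) = 0.
    by apply: filterS Hn => t [_ [h _ _]]; exact: (h v').
  have D0 : 'D_1 (fun t : R => lprod (z t) (((fun x => 'D_v' X x) \o a) t)) 0 = 'D_1 (cst (0:R) : R -> R) 0.
    apply: near_eq_derive; exact: H0.
  move: D0; rewrite derive_cst (Dlprod dz dg) z0.
  have dDa : differentiable (fun x => 'D_v' X x) (a 0).
    rewrite ha0; exact: (dDX v' hu).
  rewrite (Dcomp da dDa) /= ha0 -/v hz'.
  rewrite !lprodDl !lprodZl nT_normal xi_normal.
  case: hW => hen _ _; rewrite hen => h; lra.
- have [hen hex hent] := hW.
  rewrite hL' hz'; apply: Pi_formula => //.
    rewrite lprodC; exact: nT_normal.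
  rewrite lprodC; exact: xi_normal.
- have H1 : \forall t \near 0, lprod (nT (a t) + z t) (nT (a t) + z t) = 0.
    apply: filterS Hn => t [Ut [_ hzz hzn]].
    case: hN => _ _ hun _.
    rewrite !lprodDl !lprodDr (hun _ Ut) hzz hzn lprodC hzn; ring.
  have D1 : 'D_1 (fun t : R => lprod (nT (a t) + z t) (nT (a t) + z t)) 0
          = 'D_1 (cst (0:R) : R -> R) 0.
    apply: near_eq_derive; exact: H1.
  move: D1; rewrite derive_cst (Dlprod dy dy) y'E.
  move: ('D_v nT u + 'D_1 z 0) hL' => Y hL'.
  rewrite yy0 (lprodC y0) => h2.
  rewrite hL' lprodDl !lprodZl y0y0 mulr0 addr0.
  have -> : lprod Y y0 = 0 by lra.
  by rewrite mulr0.
Qed.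
Lemma vec_eq (V : zmodType) (A B C D : V) : A + D = B + C -> A - B = C - D.
Proof. by move=> h; rewrite -[A](addrK D) h addrAC [B + C]addrC addrK. Qed.

Lemma Dd_zero (d : 'rV[R]_s) : lprod ('D_d X u) ('D_d X u) = 0 -> d = 0.
Proof.
case: hX => _ _ hsp _ _ h; apply/eqP; apply/negP => /negP dn0.
by have := hsp u d hu dn0; rewrite h ltxx.
Qed.

Lemma linrel m (w L : 'I_m -> 'rV[R]_n.+1) (c : 'I_m -> R) w' L' :
  (forall k, tanrel U X nT u xi (w k) (L k)) -> tanrel U X nT u xi w' L' ->
  w' = \sum_k c k *: w k ->
  Pitau (nT u) xi L' = \sum_k c k *: Pitau (nT u) xi (L k).
Proof.
move=> hw hw' hsum.
have hd : forall k, exists t : 'rV[R]_s * 'rV[R]_n.+1 * 'rV[R]_s,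
  [/\ w k = 'D_(t.1.1) X u + t.1.2, inW X nT u xi t.1.2,
     (forall v', lprod ('D_(t.2) X u) ('D_v' X u) =
                  - lprod xi ('D_(t.1.1) (fun x => 'D_v' X x) u)),
     Pitau (nT u) xi (L k) = c0 *: (Pitau (nT u) xi ('D_(t.1.1) nT u) + 'D_(t.2) X u + t.1.2)
   & lprod (L k) y0 = 0].
  move=> k; have [v [et [e H]]] := decomp (hw k); exists (v, et, e); exact: H.
have [f hf] := choice hd.
pose vk k := (f k).1.1. pose ek k := (f k).2. pose etk k := (f k).1.2.
have [v' [eta' [e' [hw'1 [hen' _ _] he' hP' _]]]] := decomp hw'.
have dXu := dX hu.
pose d := v' - \sum_k c k *: vk k.
have Dd : 'D_d X u = \sum_k c k *: etk k - eta'.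
  rewrite (DlinB _ _ dXu) (Dlin _ _ dXu).
  have : 'D_v' X u + eta' = \sum_k c k *: ('D_(vk k) X u + etk k).
    rewrite -hw'1 hsum; apply: eq_bigr => k _.
    by have [-> _ _ _ _] := hf k.
  rewrite sum_combD; exact: vec_eq.
have d0 : d = 0.
  apply: Dd_zero; rewrite {1}Dd lprodBl lprod_suml.
  rewrite big1 ?sub0r.
    by rewrite hen' oppr0.
  by move=> k _; have [_ [hh _ _] _ _ _] := hf k; rewrite hh mulr0.
have Ev : v' = \sum_k c k *: vk k by apply/eqP; rewrite -subr_eq0; apply/eqP.
have Eeta : eta' = \sum_k c k *: etk k.
  apply/eqP; rewrite eq_sym -subr_eq0 -Dd d0 derive0; done.
pose g := e' - \sum_k c k *: ek k.
have g0 : g = 0.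
  have key : forall y, lprod ('D_g X u) y =
      lprod ('D_e' X u) y - \sum_k c k * lprod ('D_(ek k) X u) y.
    by move=> y; rewrite /g (DlinB _ _ dXu) (Dlin _ _ dXu) lprodBl lprod_suml.
  apply: Dd_zero; rewrite key he'.
  rewrite (eq_bigr (fun k => c k * - lprod xi ('D_(vk k) (fun x => 'D_g X x) u))); last first.
    by move=> k _; have [_ _ hh _ _] := hf k; rewrite hh.
  rewrite Ev (Dlin _ _ (dDX g hu)) lprod_sumr.
  rewrite [X in _ - X](eq_bigr (fun i => - (c i * lprod xi ('D_(vk i) (fun x => 'D_g X x) u)))); last first.
    by move=> i _; rewrite mulrN.
  by rewrite sumrN opprK addNr.
have Ee : 'D_e' X u = \sum_k c k *: 'D_(ek k) X u.
  apply/eqP; rewrite -subr_eq0 -(Dlin _ _ dXu) -(DlinB _ _ dXu) -/g g0 derive0; done.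
have En : 'D_v' nT u = \sum_k c k *: 'D_(vk k) nT u.
  by rewrite Ev (Dlin _ _ (dN hu)).
rewrite hP' En Ee Eeta lin_final; apply: eq_bigr => k _.
by have [_ _ _ -> _] := hf k.
Qed.
Lemma Pi_iso (p q : 'rV[R]_n.+1) : lprod p y0 = 0 -> lprod q y0 = 0 ->
  lprod (Pitau (nT u) xi p) (Pitau (nT u) xi q) = lprod p q.
Proof.
rewrite /y0 !lprodDr => hp hq.
have hp' : lprod p xi = - lprod p (nT u) by lra.
have hq' : lprod q xi = - lprod q (nT u) by lra.
rewrite /Pitau ?lprodBl ?lprodDl ?lprodBr ?lprodDr ?lprodNl ?lprodNr ?lprodZl ?lprodZr.
rewrite ?lprodBl ?lprodDl ?lprodBr ?lprodDr ?lprodNl ?lprodNr ?lprodZl ?lprodZr.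
rewrite hnn hxx hxn hnx ?(lprodC (nT u) q) ?(lprodC xi q) ?(lprodC (nT u) p) ?(lprodC xi p).
rewrite hp' hq'; ring.
Qed.

Lemma PiQ (p : 'rV[R]_n.+1) :
  lprod (Pitau (nT u) xi p) (nT u) = 0 /\ lprod (Pitau (nT u) xi p) xi = 0.
Proof.
rewrite /Pitau !lprodBl !lprodDl !lprodZl hnn hxx hxn hnx; split; ring.
Qed.

Lemma tanQ w L : tanrel U X nT u xi w L ->
  lprod w (nT u) = 0 /\ lprod w xi = 0.
Proof.
move=> /decomp [v [et [e [-> [_ h1 h2] _ _ _]]]].
rewrite !lprodDl h1 h2 (lprodC _ (nT u)) (lprodC _ xi) nT_normal xi_normal.
by rewrite !addr0.
Qed.

Lemma tan0 : tanrel U X nT u xi 0 0.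
Proof.
exists (fun _ => u), (fun _ => xi), 0; split; first split.
- by [].
- by [].
- by apply: filterE => _; split; [exact: hu | exact: hxi].
- exact: derivable_cst.
- exact: derivable_cst.
split.
- split; [by move=> v; rewrite lprod0l | exact: lprod0l | exact: lprod0l].
- exists 0, 0, 0; rewrite derive0 !scale0r !addr0 subr0.
  have -> : (fun _ : R => xi) = cst xi by [].
  exact: derive_cst.
- have -> : X \o (fun _ : R => u) = cst (X u) by [].
  by rewrite derive_cst addr0.
- have -> : (fun t : R => tildev (nT u + xi)) = cst (tildev (nT u + xi)) by [].
  by rewrite derive_cst.
Qed.
Lemma tan_y0 w L : tanrel U X nT u xi w L -> lprod L y0 = 0.
Proof. by move=> /decomp [v [et [e [_ _ _ _ h]]]]. Qed.

Lemma gram_Pi m (L : 'I_m -> 'rV[R]_n.+1) w :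
  (forall i, tanrel U X nT u xi (w i) (L i)) ->
  gram L = gram (fun i => - Pitau (nT u) xi (L i)).
Proof.
move=> hw; rewrite gramN; apply/matrixP => i j; rewrite !mxE.
by rewrite Pi_iso //; apply: tan_y0; [exact: (hw i) | exact: (hw j)].
Qed.

Lemma core m (w L b Lb : 'I_m -> 'rV[R]_n.+1) (A : 'M[R]_m) :
  (forall i, tanrel U X nT u xi (w i) (L i)) ->
  (forall i, tanrel U X nT u xi (b i) (Lb i)) ->
  (forall w L, tanrel U X nT u xi w L -> exists c : 'I_m -> R, w = \sum_i c i *: b i) ->
  (forall i, - Pitau (nT u) xi (Lb i) = \sum_j A i j *: b j) ->
  Num.sqrt (\det (gram L)) = `|\det A| * Num.sqrt (\det (gram w)).
Proof.
move=> hw hb hspan hA.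
have [C hC] := choice (fun i => hspan _ _ (hw i)).
pose CM := \matrix_(i, k) C i k.
have hPL : forall i, - Pitau (nT u) xi (L i) = \sum_j (CM *m A) i j *: b j.
  move=> i; rewrite (linrel hb (hw i) (hC i)) -sumrN.
  rewrite (eq_bigr (fun k => C i k *: \sum_j A k j *: b j)); last first.
    by move=> k _; rewrite -scalerN hA.
  under eq_bigr do rewrite scaler_sumr.
  rewrite exchange_big /=; apply: eq_bigr => j _.
  rewrite !mxE scaler_suml; apply: eq_bigr => k _.
  by rewrite mxE scalerA.
have gL : gram L = (CM *m A) *m gram b *m (CM *m A)^T.
  by rewrite (gram_Pi hw); apply: gram_comb.
have gw : gram w = CM *m gram b *m CM^T.
  apply: gram_comb => i; rewrite (hC i); apply: eq_bigr => k _.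
  by rewrite mxE.
have -> : \det (gram L) = \det A ^+ 2 * \det (gram w).
  rewrite gL gw !det_mulmx !det_tr !det_mulmx; ring.
by rewrite sqrtrM ?sqr_ge0 // sqrtr_sqr.
Qed.
Lemma main_res (w L : 'I_n.-1 -> 'rV[R]_n.+1) :
  (forall i, tanrel U X nT u xi (w i) (L i)) ->
  Num.sqrt (\det (gram L)) = `|Kl U X nT u xi| * Num.sqrt (\det (gram w)).
Proof.
move=> hw; rewrite /Kl; case: xgetP => [k _ [b [Lb [A [hb _ hspan hA ->]]]] | Hn].
  exact: core hw hb hspan hA.
rewrite normr0 mul0r.
have hQ : forall i, lprod (w i) (nT u) = 0 /\ lprod (w i) xi = 0.
  by move=> i; exact: tanQ (hw i).
case: (pselect (forall c : 'I_n.-1 -> R, \sum_i c i *: w i = 0 -> forall i, c i = 0)).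
  move=> ind; exfalso.
  have hA : forall i, exists c : 'I_n.-1 -> R,
      - Pitau (nT u) xi (L i) = \sum_j c j *: w j.
    move=> i; apply: span_Qn hnn hxx hnx hQ ind _ _.
      by rewrite lprodNl (proj1 (PiQ _)) oppr0.
    by rewrite lprodNl (proj2 (PiQ _)) oppr0.
  have [A hA'] := choice hA.
  apply: (Hn (\det (\matrix_(i, j) A i j))).
  exists w, L, (\matrix_(i, j) A i j); split => //.
  - move=> w' L' /tanQ [h1 h2].
    exact: span_Qn hnn hxx hnx hQ ind h1 h2.
  - by move=> i; rewrite hA'; apply: eq_bigr => j _; rewrite mxE.
move/existsNP => [c /not_implyP [hs /existsNP [i0 hi0]]].
have hz := linrel (c:=c) hw tan0 (esym hs).
rewrite Pitau0 in hz.
rewrite (gram_Pi hw) gramN (det_gram_dep (c := c) (i0 := i0)) ?sqrtr0 //.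
  by apply/eqP.
Qed.
End Main.

Theorem theorem6p1 (R : realType) (s n : nat) (U : set 'rV[R]_s)
  (X nT : 'rV[R]_s -> 'rV[R]_n.+1) :
  open U -> spacelike_embedding U X -> future_unit_timelike_normal U X nT ->
  forall (u : 'rV[R]_s) (xi : 'rV[R]_n.+1), U u -> inN1 X nT u xi ->
  forall (w L : 'I_n.-1 -> 'rV[R]_n.+1),
    (forall i, tanrel U X nT u xi (w i) (L i)) ->
    Num.sqrt (\det (gram L)) = `|Kl U X nT u xi| * Num.sqrt (\det (gram w)).
Proof.
move=> _ hX hN u xi hu hxi w L hw.
exact: (main_res hX hN hu hxi hw).
Qed.
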